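(* Let $T$ be dependent. For every formula $\varphi(\bar x,\bar y,\bar z)$ with $\bar y,\bar z$ finite there is $n<\omega$ (depending only on $\varphi$ and $T$) such that for every $\mathbf x\in K_0$ with $\ell g(\bar x)=\ell g(\bar{\mathbf d}_{\mathbf x})$ the set $$J_{\mathbf x,\varphi}=\{t\in I_{\mathbf x}:\ n_{\mathbf x,t}\ge 2\text{ and there are }\alpha_0,\dots,\alpha_{k-1}<\ell g(\bar c_{\mathbf x,t,0})\ (k=\ell g(\bar y))\text{ and }\bar b\in{}^{\ell g(\bar z)}(A_{\mathbf x}\cup\textstyle\bigcup\{\bar c_{\mathbf x,s}:s\in I_{\mathbf x}\setminus\{t\}\})$$ $$\text{with }\mathfrak C\models\varphi[\bar{\mathbf d}_{\mathbf x},\langle(\bar c_{\mathbf x,t,0})_{\alpha_i}:i<k\rangle,\bar b]\wedge\neg\varphi[\bar{\mathbf d}_{\mathbf x},\langle(\bar c_{\mathbf x,t,1})_{\alpha_i}:i<k\rangle,\bar b]\}$$ has at most $n$ elements.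
   Context: $T$ complete first-order, $\mathfrak C$ its monster model; dependent = NIP. $K_0$ is the family of $\mathbf x=(A,B,\bar{\mathbf c},\bar{\mathbf d})$ where $B\subseteq A$, $\bar{\mathbf d}$ is a sequence, $I=I_{\mathbf x}$ is a linear order, $\bar{\mathbf c}=\langle\bar c_{t,n}:t\in I,n<n_t\rangle$ with $1\le n_t\le\omega$, each $\bar c_{t,n}$ a finite sequence with $\ell g(\bar c_{t,n})$ depending only on $t$, $\bar c_t=\bar c_{t,0}{}^\frown\bar c_{t,1}{}^\frown\cdots$, and for each $t\in I$ the sequence $\langle\bar c_{t,n}:n<n_t\rangle$ is indiscernible over $A\cup\bigcup\{\bar c_s:s\in I\setminus\{t\}\}$. Write $A_{\mathbf x},\bar{\mathbf d}_{\mathbf x},I_{\mathbf x},\bar c_{\mathbf x,t},\bar c_{\mathbf x,t,n},n_{\mathbf x,t}$; $(\bar c)_\alpha$ denotes the $\alpha$-th entry of $\bar c$. *)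

(* Defs.v *)
From mathcomp Require Import all_boot.
Set Implicit Arguments.
Unset Strict Implicit.
Unset Printing Implicit Defensive.

Record signature : Type := Signature {
  funs : Type; rels : Type;
  fun_ar : funs -> nat; rel_ar : rels -> nat }.

Section Syntax.
Variable L : signature.

Inductive term (V : Type) : Type :=
| tvar : V -> term V
| tapp : forall f : funs L, ('I_(fun_ar f) -> term V) -> term V.

(** formulas with free variables in V (de Bruijn style: [fAll] binds [None]) *)
Inductive formula : Type -> Type :=
| fFalse : forall V, formula V
| fEq : forall V, term V -> term V -> formula V
| fRel : forall V (r : rels L), ('I_(rel_ar r) -> term V) -> formula V
| fImp : forall V, formula V -> formula V -> formula V
| fAll : forall V, formula (option V) -> formula V.

Definition sentence := formula Empty_set.

Record structure : Type := Structure {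
  carrier :> Type;
  ifun : forall f : funs L, ('I_(fun_ar f) -> carrier) -> carrier;
  irel : forall r : rels L, ('I_(rel_ar r) -> carrier) -> Prop }.

Fixpoint eval (M : structure) V (e : V -> M) (t : term V) : M :=
  match t with
  | tvar v => e v
  | tapp f a => @ifun M f (fun i => eval e (a i))
  end.

Fixpoint sat (M : structure) V (phi : formula V) : (V -> M) -> Prop :=
  match phi in formula V0 return (V0 -> M) -> Prop with
  | fFalse _ => fun _ => False
  | fEq _ t1 t2 => fun e => eval e t1 = eval e t2
  | fRel _ r a => fun e => @irel M r (fun i => eval e (a i))
  | fImp _ p q => fun e => sat p e -> sat q e
  | fAll _ p => fun e => forall x : M,
      sat p (fun o => match o with Some v => e v | None => x end)
  end.

Definition holds (M : structure) (s : sentence) : Prop :=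
  sat s (fun v : Empty_set => match v return carrier M with end).

Definition is_model (M : structure) (T : sentence -> Prop) : Prop :=
  inhabited M /\ forall s, T s -> holds M s.

Definition complete (T : sentence -> Prop) : Prop :=
  (exists M : structure, is_model M T) /\
  forall s : sentence,
    (forall M : structure, is_model M T -> holds M s) \/
    (forall M : structure, is_model M T -> ~ holds M s).

Definition env2 (M : structure) (A B : Type) (a : A -> M) (b : B -> M)
  (w : A + B) : M := match w with inl x => a x | inr y => b y end.

Definition dependent (T : sentence -> Prop) : Prop :=
  forall (p q : nat) (phi : formula ('I_p + 'I_q)) (M : structure),
    is_model M T ->
    ~ exists (a : nat -> 'I_p -> M) (b : (nat -> bool) -> 'I_q -> M),
        forall (i : nat) (S : nat -> bool), sat phi (env2 (a i) (b S)) <-> S i.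

(** n < n_t, where n_t in {1,...,omega}; [None] encodes omega *)
Definition nlt (n : nat) (o : option nat) : Prop :=
  match o with None => True | Some m => n < m end.

Definition strict_linear (I : Type) (lt : I -> I -> Prop) : Prop :=
  (forall a, ~ lt a a) /\ (forall a b c, lt a b -> lt b c -> lt a c) /\
  (forall a b, lt a b \/ a = b \/ lt b a).

Definition indiscernible (M : structure) (N : option nat) (len : nat)
  (c : nat -> 'I_len -> M) (P : M -> Prop) : Prop :=
  forall (r p : nat) (psi : formula (('I_r * 'I_len) + 'I_p)) (b : 'I_p -> M),
    (forall l, P (b l)) ->
    forall u v : 'I_r -> nat,
      (forall j j' : 'I_r, j < j' -> u j < u j') ->
      (forall j j' : 'I_r, j < j' -> v j < v j') ->
      (forall j, nlt (u j) N) -> (forall j, nlt (v j) N) ->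
      (sat psi (env2 (fun w : 'I_r * 'I_len => c (u w.1) w.2) b) <->
       sat psi (env2 (fun w : 'I_r * 'I_len => c (v w.1) w.2) b)).

Record K0data (M : structure) (X : Type) : Type := K0Data {
  kA : M -> Prop;
  kB : M -> Prop;
  kd : X -> M;
  kI : Type;
  klt : kI -> kI -> Prop;
  knt : kI -> option nat;     (* n_t, None = omega *)
  klen : kI -> nat;
  kc : forall t : kI, nat -> 'I_(klen t) -> M  (* c_{t,n}, for n < n_t *)
}.

Arguments kA {M X} k _.
Arguments kB {M X} k _.
Arguments kd {M X} k _.
Arguments kI {M X} k.
Arguments klt {M X} k _ _.
Arguments knt {M X} k _.
Arguments klen {M X} k _.
Arguments kc {M X} k t _ _.

Definition other_c (M : structure) X (x : K0data M X) (t : kI x) (y : M) : Prop :=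
  exists s, s <> t /\ exists n, nlt n (knt x s) /\ exists i, y = kc x s n i.

Arguments other_c {M X} x t y.

Definition in_K0 (M : structure) X (x : K0data M X) : Prop :=
  (forall y, kB x y -> kA x y) /\
  strict_linear (klt x) /\
  (forall t, match knt x t return Prop with None => True | Some m => 1 <= m end) /\
  (forall t, indiscernible (knt x t) (kc x t) (fun y => kA x y \/ other_c x t y)).

Definition ge2 (o : option nat) : Prop :=
  match o with None => True | Some m => 2 <= m end.

Definition env3 (M : structure) (A B C : Type) (a : A -> M) (b : B -> M)
  (c : C -> M) (w : (A + B) + C) : M :=
  match w with inl (inl x) => a x | inl (inr y) => b y | inr z => c z end.

Definition inJ (M : structure) X (x : K0data M X) (k m : nat)
  (phi : formula ((X + 'I_k) + 'I_m)) (t : kI x) : Prop :=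
  ge2 (knt x t) /\
  exists (alpha : 'I_k -> 'I_(klen x t)) (b : 'I_m -> M),
    (forall l, kA x (b l) \/ other_c x t (b l)) /\
    sat phi (env3 (kd x) (fun i => kc x t 0 (alpha i)) b) /\
    ~ sat phi (env3 (kd x) (fun i => kc x t 1 (alpha i)) b).

End Syntax.

Arguments in_K0 {L M X} x.
Arguments inJ {L M X} x {k m} phi t.
Arguments other_c {L M X} x t y.
Arguments kA {L M X} k _.
Arguments kB {L M X} k _.
Arguments kd {L M X} k _.
Arguments kI {L M X} k.
Arguments klt {L M X} k _ _.
Arguments knt {L M X} k _.
Arguments klen {L M X} k _.
Arguments kc {L M X} k t _ _.

(** propositional list membership (no eqType needed) *)
Fixpoint lmem (I : Type) (t : I) (s : seq I) : Prop :=
  match s with [::] => False | u :: s' => u = t \/ lmem t s' end.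

(* Main.v *)
Require Import Defs.
From mathcomp Require Import all_boot zify.
From mathcomp Require classical_sets filter.
From Stdlib Require Import Classical ClassicalEpsilon FunctionalExtensionality PropExtensionality ProofIrrelevance.
Set Implicit Arguments. Unset Strict Implicit. Unset Printing Implicit Defensive.

Lemma ultra_nat : exists U : (nat -> Prop) -> Prop,
  (~ U (fun _ => False)) /\
  (forall A B, U A -> U B -> U (fun n => A n /\ B n)) /\
  (forall A B : nat -> Prop, (forall n, A n -> B n) -> U A -> U B) /\
  (forall A, U A \/ U (fun n => ~ A n)) /\
  (forall N, U (fun n => N <= n)).
Proof.
have [G [GU sFG]] := filter.ultraFilterLemma (@filter.eventually_filter).
exists G; split; [|split; [|split; [|split]]].
- exact: (@filter.filter_not_empty _ G _).
- move=> A B hA hB. exact: (filter.filterI hA hB).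
- move=> A B AB hA. by apply: (@filter.filterS _ G _ A B AB hA).
- move=> A; exact: (filter.in_ultra_setVsetC A GU).
- move=> N; apply: sFG; exists N => //.
Qed.

Section Syn.
Variable L : signature.

Fixpoint trename V W (f : V -> W) (t : term L V) : term L W :=
  match t with
  | tvar v => tvar L (f v)
  | @tapp _ _ g a => @tapp L W g (fun i => trename f (a i))
  end.

Fixpoint frename V (p : formula L V) : forall W, (V -> W) -> formula L W :=
  match p in formula _ V0 return forall W, (V0 -> W) -> formula L W with
  | fFalse _ => fun W f => fFalse L W
  | @fEq _ _ t1 t2 => fun W f => fEq (trename f t1) (trename f t2)
  | @fRel _ _ r a => fun W f => @fRel L W r (fun i => trename f (a i))
  | @fImp _ _ p q => fun W f => fImp (frename p f) (frename q f)
  | @fAll _ _ p => fun W f => fAll (frename p (omap f))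
  end.

Lemma eval_rename (M : structure L) V W (f : V -> W) (e : W -> M) t :
  eval e (trename f t) = eval (fun v => e (f v)) t.
Proof.
elim: t => [v|g a IH] //=. congr (ifun _); apply: functional_extensionality => i; exact: IH.
Qed.

Lemma sat_rename (M : structure L) V (p : formula L V) :
  forall W (f : V -> W) (e : W -> M), sat (frename p f) e <-> sat p (fun v => e (f v)).
Proof.
elim: p => {V} [V|V t1 t2|V r a|V p IHp q IHq|V p IHp] W f e /=.
- by [].
- by rewrite !eval_rename.
- have -> : (fun i => eval e (trename f (a i))) = (fun i => eval (fun v => e (f v)) (a i)).
    by apply: functional_extensionality => i; rewrite eval_rename.
  by [].
- by rewrite IHp IHq.
- split=> H x; move: (H x); rewrite IHp;
  have -> : (fun v => match omap f v with Some v0 => e v0 | None => x end) =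
      (fun o => match o with Some v => e (f v) | None => x end) by
    apply: functional_extensionality => -[v|].
  all: by [].
Qed.

Definition fNot V (p : formula L V) := fImp p (fFalse L V).
Definition fTrue V := fNot (fFalse L V).
Definition fAnd V (p q : formula L V) := fNot (fImp p (fNot q)).
Definition fEx V (p : formula L (option V)) := fNot (fAll (fNot p)).

Lemma sat_fNot (M : structure L) V (p : formula L V) e : sat (fNot p) e <-> ~ sat (M:=M) p e.
Proof. by []. Qed.
Lemma sat_fAnd (M : structure L) V (p q : formula L V) e :
  sat (fAnd p q) e <-> sat (M:=M) p e /\ sat q e.
Proof. rewrite /=; tauto. Qed.
Lemma sat_fEx (M : structure L) V (p : formula L (option V)) (e : V -> M) :
  sat (fEx p) e <-> exists x, sat p (fun o => match o with Some v => e v | None => x end).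
Proof.
rewrite /=; split; last by move=> [x hx] H; exact: H hx.
move=> H; apply: NNPP => hn; apply: H => x hx; apply: hn; by exists x.
Qed.

Fixpoint bigAnd V (s : seq (formula L V)) : formula L V :=
  match s with [::] => fTrue V | p :: s' => fAnd p (bigAnd s') end.

Lemma sat_bigAnd (M : structure L) V (s : seq (formula L V)) e :
  sat (bigAnd s) e <-> forall p, List.In p s -> sat (M:=M) p e.
Proof.
elim: s => [|p s IH] /=; first by split => // _ p [].
split.
- move=> H q [<-|hq]; first by apply: NNPP => h; apply: H => hp _; exact: h hp.
  move: q hq; apply/IH; apply: NNPP => h; apply: H => _ hs; exact: h hs.
- move=> H H2; apply: H2; first by apply: H; left.
  by apply/IH => q hq; apply: H; right.
Qed.

Definition iffS V (p : formula L V) (b : bool) := if b then p else fNot p.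
Lemma sat_iffS (M : structure L) V (p : formula L V) b e :
  sat (iffS p b) e <-> (sat (M:=M) p e <-> b).
Proof.
case: b => /=; split => H.
- by split.
- by apply H.
- by split => // /H.
- by move=> /H.
Qed.

Definition ord0_elim (T : Type) (i : 'I_0) : T.
Proof. by case: i. Defined.

Definition elim0 V (w : V + 'I_0) : V.
Proof. case: w => [v|[i hi]]; [exact v| by []]. Defined.

Definition shq V Q (w : V + 'I_Q.+1) : option (V + 'I_Q) :=
  match w with
  | inl v => Some (inl v)
  | inr i => match unlift ord_max i with Some j => Some (inr j) | None => None end
  end.

Fixpoint exq V (Q : nat) : formula L (V + 'I_Q) -> formula L V :=
  match Q return formula L (V + 'I_Q) -> formula L V with
  | 0 => fun p => frename p (@elim0 V)
  | Q'.+1 => fun p => exq (fEx (frename p (@shq V Q')))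
  end.

Lemma sat_exq (M : structure L) Q : forall V (p : formula L (V + 'I_Q)) (e : V -> M),
  sat (exq p) e <-> exists d : 'I_Q -> M, sat p (env2 e d).
Proof.
elim: Q => [|Q IH] V p e /=.
- rewrite sat_rename; split.
  + move=> H; exists (fun i : 'I_0 => ord0_elim M i).
    by have -> : env2 e (fun i : 'I_0 => ord0_elim M i) = (fun v => e (elim0 v)) by apply: functional_extensionality => -[v|[]].
  + move=> [d H]; by have <- : (env2 e d) = (fun v => e (elim0 v)) by apply: functional_extensionality => -[v|[]].
- rewrite IH; split.
  + move=> [d0 /sat_fEx [x]]; rewrite sat_rename => H.
    exists (fun i => match unlift ord_max i with Some j => d0 j | None => x end).
    move: H; congr sat; apply: functional_extensionality => -[v|i] //=.
    by case: (unlift ord_max i).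
  + move=> [d H]; exists (fun j => d (lift ord_max j)); apply/sat_fEx; exists (d ord_max).
    rewrite sat_rename; move: H; congr sat; apply: functional_extensionality => -[v|i] //=.
    by case: unliftP => [j ->|->].
Qed.

End Syn.

Lemma inseqP (T : eqType) (x : T) (s : seq T) : x \in s -> List.In x s.
Proof. elim: s => //= y s IH; rewrite in_cons => /orP [/eqP ->|/IH]; tauto. Qed.

Section FV.
Variable L : signature.

Fixpoint fvt V (t : term L V) : seq V :=
  match t with
  | tvar v => [:: v]
  | @tapp _ _ g a => List.flat_map (fun i => fvt (a i)) (enum 'I_(fun_ar g))
  end.

Fixpoint dropNone V (s : seq (option V)) : seq V :=
  match s with [::] => [::] | Some v :: s' => v :: dropNone s' | None :: s' => dropNone s' end.

Lemma dropNoneP V (s : seq (option V)) v : List.In (Some v) s -> List.In v (dropNone s).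
Proof. elim: s => //= -[w|] s IH /=; [case=> [[->]|/IH]|case=> [//|/IH]]; tauto. Qed.

Fixpoint fvf V (p : formula L V) : seq V :=
  match p with
  | fFalse _ => [::]
  | @fEq _ _ t1 t2 => fvt t1 ++ fvt t2
  | @fRel _ _ r a => List.flat_map (fun i => fvt (a i)) (enum 'I_(rel_ar r))
  | @fImp _ _ p q => fvf p ++ fvf q
  | @fAll _ _ p => dropNone (fvf p)
  end.

Lemma eval_agree (M : structure L) V (t : term L V) (e1 e2 : V -> M) :
  (forall v, List.In v (fvt t) -> e1 v = e2 v) -> eval e1 t = eval e2 t.
Proof.
elim: t => [v|g a IH] /= H; first by apply: H; left.
congr (ifun _); apply: functional_extensionality => i; apply: IH => v hv; apply: H.
apply/List.in_flat_map; exists i; split => //; apply: inseqP; exact: mem_enum.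
Qed.

Lemma sat_agree (M : structure L) V (p : formula L V) :
  forall (e1 e2 : V -> M), (forall v, List.In v (fvf p) -> e1 v = e2 v) ->
  (sat p e1 <-> sat p e2).
Proof.
elim: p => {V} [V|V t1 t2|V r a|V p IHp q IHq|V p IHp] e1 e2 /= H.
- by [].
- rewrite (eval_agree (e2:=e2) (t:=t1)); last by move=> v hv; apply: H; apply/List.in_or_app; left.
  by rewrite (eval_agree (e2:=e2) (t:=t2)) //; move=> v hv; apply: H; apply/List.in_or_app; right.
- have -> : (fun i => eval e1 (a i)) = (fun i => eval e2 (a i)) => //.
  apply: functional_extensionality => i; apply: eval_agree => v hv; apply: H.
  apply/List.in_flat_map; exists i; split => //; apply: inseqP; exact: mem_enum.
- rewrite (IHp e1 e2) ?(IHq e1 e2) //; move=> v hv; apply: H; apply/List.in_or_app; tauto.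
- split=> H1 x; move: (H1 x); apply IHp => -[v|] hv //=; [exact/esym/H/dropNoneP| exact/H/dropNoneP].
Qed.

End FV.

Lemma In_nth (T : Type) (x : T) (s : seq T) : List.In x s -> exists i, i < size s /\ nth x s i = x.
Proof.
elim: s => //= y s IH [->|/IH [i [hi hn]]]; first by exists 0.
by exists i.+1.
Qed.

Lemma fin_support L X k m (phi : formula L ((X + 'I_k) + 'I_m)) :
  exists (Q : nat) (phi' : formula L (('I_Q + 'I_k) + 'I_m)),
    forall (M : structure L) (m0 : M) (d : X -> M), exists d' : 'I_Q -> M,
      forall y z, sat phi (env3 d y z) <-> sat phi' (env3 d' y z).
Proof.
pose fvX := List.flat_map (fun w : (X + 'I_k) + 'I_m =>
   match w with inl (inl x) => [:: x] | _ => [::] end) (fvf phi).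
pose q := size fvX.
pose g (x : X) : 'I_q.+1 :=
  match excluded_middle_informative (exists i : 'I_q, nth x fvX i = x) with
  | left h => widen_ord (leqnSn q) (proj1_sig (constructive_indefinite_description _ h))
  | right _ => ord_max end.
have gP : forall x, List.In x fvX -> exists i : 'I_q, g x = widen_ord (leqnSn q) i /\ nth x fvX i = x.
  move=> x hx; rewrite /g; case: excluded_middle_informative => [h|h].
  - case: (constructive_indefinite_description _ h) => i hi /=; by exists i.
  - exfalso; apply: h; have [i [hi hn]] := In_nth hx; by exists (Ordinal hi).
have ginj : forall x x', List.In x fvX -> List.In x' fvX -> g x = g x' -> x = x'.
  move=> x x' hx hx'; have [i [-> hi]] := gP x hx; have [i' [-> hi']] := gP x' hx'.
  move/(congr1 val) => /= /val_inj ii'; subst i'.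
  by rewrite -hi -hi' (set_nth_default x' x (ltn_ord i)).
pose G (w : (X + 'I_k) + 'I_m) : ('I_q.+1 + 'I_k) + 'I_m :=
  match w with inl (inl x) => inl (inl (g x)) | inl (inr a) => inl (inr a) | inr l => inr l end.
exists q.+1, (frename phi G) => M m0 d.
exists (fun j => match excluded_middle_informative (exists x, List.In x fvX /\ g x = j) with
  | left h => d (proj1_sig (constructive_indefinite_description _ h)) | right _ => m0 end).
move=> y z; rewrite (sat_rename phi G). eapply (@sat_agree L M _ phi). move=> v hv. case: v hv => [[x|a]|l] hv //=.
have hx : List.In x fvX by apply/List.in_flat_map; exists (inl (inl x)); split => //; left.
case: excluded_middle_informative => [h|h]; last by exfalso; apply: h; exists x.
case: (constructive_indefinite_description _ h) => x' [hx' e] /=.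
by rewrite (ginj _ _ hx' hx e).
Qed.

Section Ultra.
Variable L : signature.
Variable Mn : nat -> structure L.
Variable inh : forall n, Mn n.
Variable U : (nat -> Prop) -> Prop.
Hypothesis U0 : ~ U (fun _ => False).
Hypothesis UI : forall A B, U A -> U B -> U (fun n => A n /\ B n).
Hypothesis US : forall A B : nat -> Prop, (forall n, A n -> B n) -> U A -> U B.
Hypothesis UC : forall A, U A \/ U (fun n => ~ A n).
Hypothesis Ucof : forall N, U (fun n => N <= n).

Lemma UT : U (fun _ => True).
Proof. by apply: (US _ (Ucof 0)). Qed.

Lemma Unot A : U A -> U (fun n => ~ A n) -> False.
Proof. move=> h1 h2; apply: U0; apply: (US _ (UI h1 h2)) => n []; tauto. Qed.

Lemma Uiff B P P' : U B -> (forall n, B n -> (P n <-> P' n)) -> (U P <-> U P').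
Proof.
move=> hB H; split=> h; apply: (US _ (UI hB h)) => n [hb hp]; by apply/(H n hb).
Qed.

Lemma U_fin (T : finType) (A : T -> nat -> Prop) : (forall x, U (A x)) -> U (fun n => forall x, A x n).
Proof.
move=> H.
suff: U (fun n => forall x, x \in enum T -> A x n).
  by apply: US => n h x; apply: h; rewrite mem_enum.
elim: (enum T) => [|y s IH]; first by apply: (US _ UT).
apply: (US _ (UI (H y) IH)) => n [h1 h2] x; rewrite in_cons => /orP [/eqP ->|/h2] //.
Qed.

Definition Prod := forall n, Mn n.
Definition req (f g : Prod) : Prop := U (fun n => f n = g n).
Lemma req_refl f : req f f. Proof. by apply: (US _ UT). Qed.
Lemma req_sym f g : req f g -> req g f. Proof. by apply: US. Qed.
Lemma req_trans f g h : req f g -> req g h -> req f h.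
Proof. move=> h1 h2; apply: (US _ (UI h1 h2)) => n [-> ->] //. Qed.

Definition Qt := {P : Prod -> Prop | exists f, P = req f}.
Definition cls (f : Prod) : Qt := exist _ (req f) (ex_intro _ f erefl).
Definition rep (q : Qt) : Prod := proj1_sig (constructive_indefinite_description _ (proj2_sig q)).

Lemma sig_eq (x y : Qt) : proj1_sig x = proj1_sig y -> x = y.
Proof. case: x => P hP; case: y => P' hP' /= e; subst P'; congr exist; apply: proof_irrelevance. Qed.

Lemma cls_rep q : cls (rep q) = q.
Proof.
case: q => P hP; rewrite /rep /=; case: (constructive_indefinite_description _ _) => f hf /=.
subst P; congr exist; apply: proof_irrelevance.
Qed.

Lemma cls_eq f g : cls f = cls g <-> req f g.
Proof.
split.
- move/(congr1 (@proj1_sig _ _)) => /= e; apply: req_sym; rewrite -e; exact: req_refl.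
- move=> h; rewrite /cls.
  have e : req f = req g.
    apply: functional_extensionality => x; apply: propositional_extensionality; split => h2.
    + exact: (req_trans (req_sym h) h2).
    + exact: (req_trans h h2).
  exact: sig_eq.
Qed.

Lemma rep_cls f : req (rep (cls f)) f.
Proof. by apply/cls_eq; rewrite cls_rep. Qed.

Definition UP : structure L :=
  {| carrier := Qt;
     ifun := fun g a => cls (fun n => @ifun L (Mn n) g (fun i => rep (a i) n));
     irel := fun r a => U (fun n => @irel L (Mn n) r (fun i => rep (a i) n)) |}.

Definition en V (e : V -> UP) n : V -> Mn n := fun v => rep (e v) n.

Lemma los_eval V (e : V -> UP) t : eval e t = cls (fun n => eval (en e n) t).
Proof.
elim: t => [v|g a IH] /=; first by rewrite -{1}(cls_rep (e v)).
apply/cls_eq.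
have H : U (fun n => forall i, rep (eval e (a i)) n = eval (en e n) (a i)).
  apply: U_fin => i; rewrite IH; exact: rep_cls.
apply: (US _ H) => n h /=; congr (ifun _); exact: functional_extensionality.
Qed.

Lemma los V (p : formula L V) : forall e : V -> UP, sat p e <-> U (fun n => sat p (en e n)).
Proof.
elim: p => {V} [V|V t1 t2|V r a|V p IHp q IHq|V p IHp] e /=.
- split => // h; exact: U0 h.
- by rewrite !los_eval cls_eq.
- apply: (Uiff (B := fun n => forall i, rep (eval e (a i)) n = eval (en e n) (a i))).
    apply: U_fin => i; rewrite los_eval; exact: rep_cls.
  move=> n h; have -> // : (fun i => rep (eval e (a i)) n) = (fun i => eval (en e n) (a i)).
  exact: functional_extensionality.
- rewrite IHp IHq; split.
  + move=> H; case: (UC (fun n => sat p (en e n))) => h.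
    * by apply: (US _ (H h)) => n hq _.
    * by apply: (US _ h) => n hn hp; case: (hn hp).
  + move=> H hp; by apply: (US _ (UI H hp)) => n [h1 h2]; apply: h1.
- have enx : forall (x : UP) n, en (fun o => match o with Some v => e v | None => x end) n =
     (fun o => match o with Some v => en e n v | None => rep x n end).
    by move=> x n; apply: functional_extensionality => -[v|].
  split.
  + move=> H; case: (UC (fun n => forall y, sat p (fun o => match o with Some v => en e n v | None => y end))) => // h.
    exfalso.
    pose ys n : Mn n := match excluded_middle_informative (exists y, ~ sat p (fun o => match o with Some v => en e n v | None => y end)) with
       | left h => proj1_sig (constructive_indefinite_description _ h) | right _ => inh n end.
    have := H (cls ys); rewrite IHp => h2.
    apply: U0; apply: (US _ (UI (UI h h2) (rep_cls ys))) => n [[hn hs] he].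
    move: hs; rewrite enx he /ys; case: excluded_middle_informative => [h3|h3].
    * by case: (constructive_indefinite_description _ h3).
    * by exfalso; apply: h3; apply: NNPP => h4; apply: hn => y; apply: NNPP => h5; apply: h4; exists y.
  + move=> H x; rewrite IHp; apply: (US _ H) => n h; rewrite enx; exact: h.
Qed.

Lemma UP_model T : (forall n, is_model (Mn n) T) -> is_model UP T.
Proof.
move=> H; split; first by constructor; exact: (cls inh).
move=> s hs; rewrite /holds los; apply: (US _ UT) => n _.
have -> : en (fun v : Empty_set => match v return carrier UP with end) n =
   (fun v : Empty_set => match v return Mn n with end) by apply: functional_extensionality => -[].
by case: (H n) => _ /(_ s hs).
Qed.

Lemma los_fin (V : finType) (p : formula L V) (e' : forall n, V -> Mn n) :
  sat (M := UP) p (fun v => cls (fun n => e' n v)) <-> U (fun n => sat p (e' n)).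
Proof.
rewrite los; apply: (Uiff (B := fun n => forall v, rep (cls (fun n => e' n v)) n = e' n v)).
  by apply: U_fin => v; apply: rep_cls.
move=> n h; have -> // : en (fun v => cls (fun n => e' n v)) n = e' n.
exact: functional_extensionality.
Qed.

End Ultra.

Definition indep_prop (m N K : nat) := forall (T : finType) (E : rel T) (A : {set T}),
  (forall v, v \in A -> #|[set w in A | E v w]| <= m) -> K <= #|A| ->
  exists B : {set T}, B \subset A /\ N <= #|B| /\
    (forall v w, v \in B -> w \in B -> v != w -> ~~ E v w).

Lemma indep m : forall N, exists K, indep_prop m N K.
Proof.
elim: m => [|m IHm] N.
  exists N => T E A H hA; exists A; split => //; split => // v w hv hw _.
  apply/negP => hE; have := H v hv; rewrite leqn0 cards_eq0 => /eqP /setP /(_ w).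
  by rewrite !inE hw hE.
elim: N => [|N IHN].
  exists 0 => T E A H hA; exists set0; split; first exact: sub0set.
  by split => // v w; rewrite inE.
have [K1 H1] := IHN; have [K2 H2] := IHm N.+1.
exists (m.+2 + K1 + K2) => T E A H hA.
have : 0 < #|A| by lia.
case/card_gt0P => v0 hv0.
set Out := [set w in A | E v0 w].
set Rest := A :\ v0 :\: Out.
set P := Rest :&: [set w | E w v0].
set Q := Rest :\: [set w | E w v0].
have hOut : #|Out| <= m.+1 by apply: H.
have hA1 : #|A| = #|A :\ v0| + 1 by rewrite (cardsD1 v0 A) hv0; lia.
have hR : #|Rest| >= #|A :\ v0| - #|Out|.
  rewrite /Rest (cardsD (A :\ v0) Out); have := subset_leq_card (subsetIr (A :\ v0) Out); lia.
have hPQ : #|P| + #|Q| = #|Rest| by rewrite cardsID.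
have RA : Rest \subset A :\ v0 by apply: subsetDl.
have RA' : Rest \subset A by apply: (subset_trans RA); apply: subD1set.
have QA : Q \subset A by apply: (subset_trans _ RA'); apply: subsetDl.
have PA : P \subset A by apply: (subset_trans _ RA'); apply: subsetIl.
case: (leqP K1 #|Q|) => hQ.
- have [B [BQ [hB indB]]] : exists B : {set T}, B \subset Q /\ N <= #|B| /\
    (forall v w, v \in B -> w \in B -> v != w -> ~~ E v w).
    apply: H1 => // v hv; apply: (leq_trans _ (H v ((subsetP QA) v hv))).
    apply: subset_leq_card; apply/subsetP => w; rewrite inE => /andP [hwQ hE]; by rewrite inE ((subsetP QA) w hwQ) hE.
  have v0B : v0 \notin B.
    apply/negP => /(subsetP BQ) /(subsetP (subsetDl _ _)) /(subsetP RA); by rewrite !inE eqxx.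
  exists (v0 |: B); split; first by rewrite subUset sub1set hv0 (subset_trans BQ QA).
  split; first by rewrite cardsU1 v0B; lia.
  have hQ2 : forall w, w \in B -> ~~ E v0 w /\ ~~ E w v0.
    move=> w /(subsetP BQ); rewrite !inE => /and4P [h1 h2 _ h4].
    by move: h2; rewrite h4 /= => ->.
  move=> v w; rewrite !inE => /orP [/eqP ->|hv] /orP [/eqP ->|hw]; rewrite ?eqxx //.
  + by move=> _; case: (hQ2 w hw).
  + by move=> _; case: (hQ2 v hv).
  + exact: indB.
- have hP : K2 <= #|P| by lia.
  have [B [BP [hB indB]]] : exists B : {set T}, B \subset P /\ N.+1 <= #|B| /\
    (forall v w, v \in B -> w \in B -> v != w -> ~~ E v w).
    apply: H2 => // v hv.
    have hvA := subsetP PA v hv.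
    have Ev : E v v0 by move: hv; rewrite !inE => /andP [_ ->].
    have : #|[set w in A | E v w] :\ v0| <= m.
      have := H v hvA; rewrite (cardsD1 v0 [set w in A | E v w]) !inE hv0 Ev /=; lia.
    apply: leq_trans; apply: subset_leq_card; apply/subsetP => w; rewrite inE => /andP [hwP hE].
    have hwA := (subsetP PA) w hwP.
    move: hwP; rewrite !inE => /andP [/and3P [_ -> ->] _]; by rewrite hE.
  exists B; split => //; exact: (subset_trans BP PA).
Qed.

Section Model.
Variables (L : signature) (M : structure L) (X : Type) (x : K0data M X).
Hypothesis Hx : in_K0 x.

Lemma indisc_fin (s : kI x) r (Qt : finType)
  (psi : formula L (('I_r * 'I_(klen x s)) + Qt)) (b : Qt -> M) (u v : 'I_r -> nat) :
  (forall l, kA x (b l) \/ other_c x s (b l)) ->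
  (forall j j' : 'I_r, j < j' -> u j < u j') ->
  (forall j j' : 'I_r, j < j' -> v j < v j') ->
  (forall j, nlt (u j) (knt x s)) -> (forall j, nlt (v j) (knt x s)) ->
  (sat psi (env2 (fun w : 'I_r * 'I_(klen x s) => kc x s (u w.1) w.2) b) <->
   sat psi (env2 (fun w : 'I_r * 'I_(klen x s) => kc x s (v w.1) w.2) b)).
Proof.
move=> hb hu hv hu' hv'.
case: Hx => _ [_ [_ Hind]].
pose f (w : ('I_r * 'I_(klen x s)) + Qt) : ('I_r * 'I_(klen x s)) + 'I_#|Qt| :=
  match w with inl a => inl a | inr q => inr (enum_rank q) end.
have := Hind s r #|Qt| (frename psi f) (fun l => b (enum_val l)) (fun l => hb _) u v hu hv hu' hv'.
rewrite !sat_rename.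
have E : forall g : 'I_r * 'I_(klen x s) -> M,
   (fun w => env2 g (fun l => b (enum_val l)) (f w)) = env2 g b.
  by move=> g; apply: functional_extensionality => -[a|q] //=; rewrite enum_rankK.
by rewrite !E.
Qed.

Variables (k m Q N : nat) (t : 'I_N -> kI x) (tinj : injective t)
  (alpha : forall i, 'I_k -> 'I_(klen x (t i))) (bb : 'I_N -> 'I_m -> M).
Hypothesis H2 : forall i, ge2 (knt x (t i)).
Hypothesis Hb : forall i j l, kA x (bb i l) \/ other_c x (t j) (bb i l).

Definition Wt := (('I_N * 'I_k) + ('I_N * 'I_m))%type.

Definition Eenv (eps : 'I_N -> bool) (w : Wt) : M :=
  match w with inl (i, a) => kc x (t i) (eps i) (alpha i a) | inr (i, l) => bb i l end.

Lemma nlt01 i (b : bool) : nlt b (knt x (t i)).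
Proof. have := H2 i; case: (knt x (t i)) => //= n; case: b => /=; lia. Qed.

Lemma swap (Th : formula L Wt) eps eps' j :
  eps j = false -> eps' j = true -> (forall i, i != j -> eps i = eps' i) ->
  (sat Th (Eenv eps) <-> sat Th (Eenv eps')).
Proof.
move=> e1 e2 e3.
pose Qt := (({i : 'I_N | i != j} * 'I_k) + ('I_N * 'I_m))%type.
pose rho (w : Wt) : ('I_1 * 'I_(klen x (t j))) + Qt :=
  match w with
  | inl (i, a) => match insub i with Some ii => inr (inl (ii, a)) | None => inl (ord0, alpha j a) end
  | inr p => inr (inr p) end.
pose b (q : Qt) : M := match q with
  | inl (ii, a) => kc x (t (sval ii)) (eps (sval ii)) (alpha (sval ii) a)
  | inr (i, l) => bb i l end.
have key : forall (e0 : 'I_N -> bool) (n0 : nat), e0 j = n0 :> nat -> (forall i, i != j -> eps i = e0 i) ->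
   (fun w => env2 (fun w0 : 'I_1 * 'I_(klen x (t j)) => kc x (t j) ((fun _ => n0) w0.1) w0.2) b (rho w))
   = Eenv e0.
  move=> e0 n0 he0 hne; apply: functional_extensionality => -[[i a]|[i l]] //=.
  case: insubP => [ii hij hv|].
  - subst i; by rewrite /= hne.
  - rewrite negbK => /eqP ->; by rewrite he0.
have hb : forall l, kA x (b l) \/ other_c x (t j) (b l).
  move=> [[[i hij] a]|[i l]] /=; last exact: Hb.
  right; exists (t i); split; first by move=> /tinj /eqP; rewrite (negbTE hij).
  exists (eps i); split; first exact: nlt01.
  by exists (alpha i a).
have := indisc_fin (frename Th rho) hb (u := fun _ => 0) (v := fun _ => 1).
rewrite !sat_rename (key eps 0) //; last by rewrite e1.
rewrite (key eps' 1) //; last by rewrite e2.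
apply.
- by move=> a c; rewrite (ord1 a) (ord1 c) ltnn.
- by move=> a c; rewrite (ord1 a) (ord1 c) ltnn.
- move=> _; exact: (nlt01 j false).
- move=> _; exact: (nlt01 j true).
Qed.

Lemma all_swap Th eps : sat Th (Eenv eps) <-> sat Th (Eenv (fun _ => false)).
Proof.
suff H : forall h, sat Th (Eenv (fun i => eps i && (i < h))) <-> sat Th (Eenv (fun _ => false)).
  have := H N.
  have -> // : (fun i : 'I_N => eps i && (i < N)) = eps.
  by apply: functional_extensionality => i; rewrite ltn_ord andbT.
elim=> [|h IH].
  have -> // : (fun i : 'I_N => eps i && (i < 0)) = (fun _ => false).
  by apply: functional_extensionality => i; rewrite andbF.
rewrite -IH.
case: (ltnP h N) => hN; last first.
  have -> // : (fun i : 'I_N => eps i && (i < h.+1)) = (fun i => eps i && (i < h)).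
  apply: functional_extensionality => i.
  by rewrite (leq_trans (ltn_ord i) hN) (leq_trans (ltn_ord i) (leqW hN)).
pose j := Ordinal hN.
have hne : forall i : 'I_N, i != j -> (i < h.+1) = (i < h).
  move=> i hi; rewrite ltnS leq_eqVlt.
  have -> : (nat_of_ord i == h) = false by apply/negbTE; move: hi; apply: contra => /eqP e; apply/eqP/val_inj.
  by [].
case ej : (eps j).
- symmetry; apply: (@swap _ _ _ j).
  + by rewrite /= ltnn andbF.
  + by rewrite ej /= ltnSn.
  + by move=> i hi; rewrite hne.
- have -> // : (fun i : 'I_N => eps i && (i < h.+1)) = (fun i => eps i && (i < h)).
  apply: functional_extensionality => i.
  case: (eqVneq i j) => [->|hi]; first by rewrite ej.
  by rewrite hne.
Qed.

Definition rhoi (i : 'I_N) (w : ('I_Q + 'I_k) + 'I_m) : Wt + 'I_Q :=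
  match w with inl (inl q) => inr q | inl (inr a) => inl (inl (i, a)) | inr l => inl (inr (i, l)) end.

Definition Theta (phi' : formula L (('I_Q + 'I_k) + 'I_m)) (S : 'I_N -> bool) : formula L Wt :=
  exq (bigAnd [seq iffS (frename phi' (rhoi i)) (S i) | i <- enum 'I_N]).

Lemma sat_Theta phi' S (E : Wt -> M) : sat (Theta phi' S) E <->
  exists d, forall i, (sat phi' (env3 d (fun a => E (inl (i, a))) (fun l => E (inr (i, l)))) <-> S i).
Proof.
have envE : forall (d : 'I_Q -> M) i, (fun w => env2 E d (rhoi i w)) =
    env3 d (fun a => E (inl (i, a))) (fun l => E (inr (i, l))).
  by move=> d i; apply: functional_extensionality => -[[q|a]|l].
rewrite /Theta sat_exq; split => -[d H]; exists d.
- move=> i; have := (proj1 (sat_bigAnd _ _) H (iffS (frename phi' (rhoi i)) (S i))).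
  rewrite sat_iffS sat_rename envE; apply; apply/List.in_map_iff; exists i; split => //.
  apply: inseqP; exact: mem_enum.
- apply/sat_bigAnd => p /List.in_map_iff [i [<- _]].
  by rewrite sat_iffS sat_rename envE.
Qed.

Lemma model_pattern phi' (d' : 'I_Q -> M) :
  (forall i, sat phi' (env3 d' (fun a => kc x (t i) 0 (alpha i a)) (bb i)) /\
        ~ sat phi' (env3 d' (fun a => kc x (t i) 1 (alpha i a)) (bb i))) ->
  forall S : 'I_N -> bool, exists d'' : 'I_Q -> M, forall i,
    (sat phi' (env3 d'' (fun a => kc x (t i) 0 (alpha i a)) (bb i)) <-> S i).
Proof.
move=> HJ S.
have := proj1 (all_swap (Theta phi' S) (fun i => ~~ S i)).
rewrite !sat_Theta /=; apply; exists d' => i.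
case: (HJ i) => h0 h1; case hS : (S i) => /=; split => //.
Qed.

End Model.

Lemma lmem_map (I : Type) (f : nat -> I) (s : seq nat) t :
  (exists i, i \in s /\ f i = t) -> lmem t (map f s).
Proof.
elim: s => [|y s IH] [i [hi hf]] //=.
move: hi; rewrite in_cons => /orP [/eqP e|hi]; first by left; rewrite -e.
by right; apply: IH; exists i.
Qed.

Lemma many (I : Type) (P : I -> Prop) n :
  ~ (exists s : seq I, size s <= n /\ forall t, P t -> lmem t s) ->
  exists f : nat -> I, (forall i, i <= n -> P (f i)) /\
     (forall i j, i <= n -> j <= n -> f i = f j -> i = j).
Proof.
move=> H.
have [t0 ht0] : exists t, P t.
  apply: NNPP => h; apply: H; exists [::]; split => // t ht; apply: h; by exists t.
suff: forall h, 0 < h -> h <= n.+1 -> exists f : nat -> I, (forall i, i < h -> P (f i)) /\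
     (forall i j, i < h -> j < h -> f i = f j -> i = j).
  by move/(_ n.+1 erefl (leqnn _)).
elim=> // h IH _ hh.
case: (posnP h) => [->|hpos].
  exists (fun _ => t0); split; first by move=> i _.
  by move=> i j hi hj _; lia.
have [f [hf1 hf2]] := IH hpos (ltnW hh).
have [t [ht hnt]] : exists t, P t /\ ~ lmem t (map f (iota 0 h)).
  apply: NNPP => hn; apply: H; exists (map f (iota 0 h)); split; first by rewrite size_map size_iota -ltnS.
  move=> t ht; apply: NNPP => hl; apply: hn; by exists t.
exists (fun i => if i == h then t else f i); split.
- move=> i hi; case: (eqVneq i h) => [_|ni]; first by [].
  by apply: hf1; rewrite ltn_neqAle ni -ltnS.
- have nf : forall i, i < h -> f i <> t.
    move=> i hi e; apply: hnt; apply: lmem_map; exists i; by rewrite mem_iota.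
  move=> i j hi hj; case: (eqVneq i h) => [ei|ni]; case: (eqVneq j h) => [ej|nj].
  + by rewrite ei ej.
  + have hj' : j < h by rewrite ltn_neqAle nj -ltnS.
    move=> /= e; exfalso; apply: (nf j hj'); by rewrite e.
  + have hi' : i < h by rewrite ltn_neqAle ni -ltnS.
    move=> /= e; exfalso; exact: (nf i hi' e).
  + apply: hf2.
    * by rewrite ltn_neqAle ni -ltnS.
    * by rewrite ltn_neqAle nj -ltnS.
Qed.

Lemma dep_choice (I : Type) (A : I -> Type) (P : forall i, A i -> Prop) :
  (forall i, exists a : A i, P i a) -> exists g : forall i, A i, forall i, P i (g i).
Proof.
move=> H; exists (fun i => proj1_sig (constructive_indefinite_description _ (H i))).
move=> i; exact: (proj2_sig (constructive_indefinite_description _ (H i))).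
Qed.

Theorem claim2p17 (L : signature) (T : sentence L -> Prop)
  (Tcomplete : complete T) (Tdep : dependent T)
  (X : Type) (k m : nat) (phi : formula L ((X + 'I_k) + 'I_m)) :
  exists n : nat,
    forall (M : structure L), is_model M T ->
    forall x : K0data M X, in_K0 x ->
      exists s : seq (kI x), size s <= n /\
        forall t, inJ x phi t -> lmem t s.
Proof.
have [Q [phi' Hsup]] := fin_support phi.
pose sg (w : ('I_Q + 'I_k) + 'I_m) : 'I_(k + m) + 'I_Q :=
  match w with inl (inl q) => inr q | inl (inr a) => inl (lshift m a) | inr l => inl (rshift k l) end.
pose psi := frename phi' sg.
pose tup (M : structure L) (y : 'I_k -> M) (z : 'I_m -> M) (w : 'I_(k + m)) : M :=
  match split w with inl a => y a | inr l => z l end.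
have Hpsi : forall (M : structure L) y z (d : 'I_Q -> M),
    sat psi (env2 (tup M y z) d) <-> sat phi' (env3 d y z).
  move=> M y z d; rewrite /psi sat_rename.
  have -> // : (fun w => env2 (tup M y z) d (sg w)) = env3 d y z.
  apply: functional_extensionality => -[[q|a]|l] //=; rewrite /tup.
  - by rewrite -[lshift m a]/(unsplit (inl a)) unsplitK.
  - by rewrite -[rshift k l]/(unsplit (inr l)) unsplitK.
apply: NNPP => Hno.
have fin : forall N, exists (M : structure L), is_model M T /\
    exists (a : nat -> 'I_(k + m) -> M) (b : (nat -> bool) -> 'I_Q -> M),
    forall i, i < N -> forall S, sat psi (env2 (a i) (b S)) <-> S i.
  move=> N.
  have [K HK] := indep m N.
  have [M [HM [x [Hx Hc]]]] : exists M : structure L, is_model M T /\ exists x : K0data M X, in_K0 x /\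
     ~ exists s : seq (kI x), size s <= K /\ forall t, inJ x phi t -> lmem t s.
    apply: NNPP => h; apply: Hno; exists K => M HM x Hx; apply: NNPP => hs; apply: h.
    exists M; split => //; exists x; split => //.
  exists M; split => //.
  case: (HM) => [[m0]] _.
  have [d' Hd'] := Hsup M m0 (kd x).
  have [f [fJ finj]] := many Hc.
  have Hex : forall i : 'I_K.+1, exists a : 'I_k -> 'I_(klen x (f i)),
      exists b : 'I_m -> M,
      (forall l, kA x (b l) \/ other_c x (f i) (b l)) /\
      sat phi' (env3 d' (fun a0 => kc x (f i) 0 (a a0)) b) /\
      ~ sat phi' (env3 d' (fun a0 => kc x (f i) 1 (a a0)) b).
    move=> i; have [_ [a [b [h1 [h2 h3]]]]] := fJ i (ltn_ord i).
    by exists a, b; rewrite -!Hd'.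
  have [al Hal] := dep_choice Hex.
  have [bb0 Hw] := dep_choice Hal.
  have finj' : forall i j : 'I_K.+1, f i = f j -> i = j.
    move=> i j e; apply: val_inj; exact: (finj _ _ (ltn_ord i) (ltn_ord j) e).
  pose Eb (i j : 'I_K.+1) : bool :=
    if excluded_middle_informative (exists l, ~ kA x (bb0 i l) /\ ~ other_c x (f j) (bb0 i l))
    then true else false.
  have EbP : forall i j : 'I_K.+1, Eb i j -> exists l, ~ kA x (bb0 i l) /\ ~ other_c x (f j) (bb0 i l).
    by move=> i j; rewrite /Eb; case: excluded_middle_informative.
  have EbN : forall i j : 'I_K.+1, ~~ Eb i j -> forall l, kA x (bb0 i l) \/ other_c x (f j) (bb0 i l).
    move=> i j; rewrite /Eb; case: excluded_middle_informative => // h _ l.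
    apply: NNPP => h2; apply: h; exists l; tauto.
  have uniq_bad : forall (i j j' : 'I_K.+1) (l : 'I_m), ~ kA x (bb0 i l) -> ~ other_c x (f j) (bb0 i l) ->
      ~ other_c x (f j') (bb0 i l) -> j = j'.
    move=> i j j' l hA hj hj'.
    have [|[s [hs [n [hn [be e]]]]]] := proj1 (Hw i) l; first by move/hA.
    have sj : s = f j by apply: NNPP => ne; apply: hj; exists s; split => //; exists n; split => //; by exists be.
    have sj' : s = f j' by apply: NNPP => ne; apply: hj'; exists s; split => //; exists n; split => //; by exists be.
    by apply: finj'; rewrite -sj -sj'.
  have deg : forall v, v \in [set: 'I_K.+1] -> #|[set w in [set: 'I_K.+1] | Eb v w]| <= m.
    move=> v _.
    pose g (l : 'I_m) : 'I_K.+1 :=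
      match excluded_middle_informative (exists j : 'I_K.+1, ~ kA x (bb0 v l) /\ ~ other_c x (f j) (bb0 v l)) with
      | left h => proj1_sig (constructive_indefinite_description _ h) | right _ => v end.
    apply: (@leq_trans #|[set g l | l in 'I_m]|); last first.
      by apply: (leq_trans (leq_imset_card _ _)); rewrite card_ord.
    apply: subset_leq_card; apply/subsetP => w; rewrite inE => /andP [_ /EbP [l [h1 h2]]].
    apply/imsetP; exists l => //; rewrite /g; case: excluded_middle_informative => [h|h].
    + case: (constructive_indefinite_description _ h) => j [h3 h4] /=.
      exact: (uniq_bad v w j l).
    + by exfalso; apply: h; exists w.
  have hK : K <= #|[set: 'I_K.+1]| by rewrite cardsT card_ord.
  have [B [_ [hB indB]]] := HK _ Eb [set: 'I_K.+1] deg hK.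
  pose sel (i : 'I_N) : 'I_K.+1 := @enum_val _ (mem B) (widen_ord hB i).
  have selB : forall i, sel i \in B by move=> i; exact: enum_valP.
  have selinj : injective sel.
    move=> i j /enum_val_inj /(congr1 val) /= e; exact: val_inj.
  pose t i := f (sel i).
  have tinj : injective t by move=> i j /finj' /selinj.
  have H2 : forall i, ge2 (knt x (t i)) by move=> i; case: (fJ (sel i) (ltn_ord (sel i))).
  have Hb : forall i j l, kA x (bb0 (sel i) l) \/ other_c x (t j) (bb0 (sel i) l).
    move=> i j l; case: (eqVneq i j) => [<-|nij]; first exact: (proj1 (Hw (sel i))).
    apply: EbN; apply: indB; rewrite ?selB //.
    by apply: contra nij => /eqP /selinj ->.
  have HJ : forall i, sat phi' (env3 d' (fun a => kc x (t i) 0 (al (sel i) a)) (bb0 (sel i))) /\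
        ~ sat phi' (env3 d' (fun a => kc x (t i) 1 (al (sel i) a)) (bb0 (sel i))).
    by move=> i; case: (Hw (sel i)) => _ [h1 h2].
  have P := model_pattern Hx tinj H2 Hb HJ.
  have [bS HbS] := dep_choice (fun S : nat -> bool => P (fun i => S i)).
  exists (fun i => match insub i with
     | Some io => tup M (fun a => kc x (t io) 0 (al (sel io) a)) (bb0 (sel io))
     | None => fun _ => m0 end), bS.
  move=> i hi S; case: insubP => [io _ hv|]; last by rewrite hi.
  rewrite Hpsi -hv; exact: (HbS S io).
have [Mn HMn] := dep_choice fin.
have [inh _] : exists inh : forall n, Mn n, True.
  have : forall n, exists y : Mn n, True by move=> n; case: (HMn n) => -[[y] _] _; by exists y.
  by move/dep_choice => [g _]; exists g.
have [U [U0 [UI [US [UC Ucof]]]]] := ultra_nat.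
have Hmod : forall n, is_model (Mn n) T by move=> n; case: (HMn n).
have [an Han] := dep_choice (fun n => proj2 (HMn n)).
have [bn Hbn] := dep_choice Han.
apply: (Tdep (k + m) Q psi (UP Mn U) (UP_model inh U0 UI US UC Ucof Hmod)).
exists (fun i (w : 'I_(k + m)) => (cls U (fun n => an n i w) : UP Mn U)),
  (fun S (w : 'I_Q) => (cls U (fun n => bn n S w) : UP Mn U)).
move=> i S.
have -> : env2 (M := UP Mn U) (fun w => cls U (fun n => an n i w)) (fun w => cls U (fun n => bn n S w)) =
    (fun v => cls U (fun n => env2 (an n i) (bn n S) v)).
  by apply: functional_extensionality => -[w|w].
rewrite (los_fin inh U0 UI US UC Ucof psi (fun n => env2 (an n i) (bn n S))).
split.
- move=> h; apply: NNPP => hS; apply: U0.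
  refine (US _ _ _ (UI _ _ h (Ucof i.+1))); move=> n [h1 h2]; apply: hS; exact: (proj1 (Hbn n i h2 S) h1).
- move=> hS; refine (US _ _ _ (Ucof i.+1)) => n hn; exact: (proj2 (Hbn n i hn S) hS).
Qed.
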